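(* Let $(V,\nu)$ be a matrix gauge space with $\mathbb{C}$-proper matrix gauge, let $(\tilde V,u)$ be its unitization with accretive cones $\tilde V_{ac}^n=\{(A,X)\in M_n(V)\times M_n: u_n(-A,-X)=0\}$, and let $S\subseteq B(K)$ be an operator system with unit $e=I_K$, regarded as a matrix gauge space with the gauge $\nu_e^n(s)=\inf\{t>0:\operatorname{Re}(s)\le t\,e\otimes I_n\}$. If $\phi:V\to S$ is linear and completely gauge contractive (i.e. $\nu_e^n(\phi^{(n)}(A))\le\nu_n(A)$ for all $n$ and $A\in M_n(V)$), then the unital extension $\tilde\phi:\tilde V\to S$, $\tilde\phi(z,\lambda)=\phi(z)+\lambda e$, is real-completely positive, i.e. $\operatorname{Re}(\tilde\phi^{(n)}(A,X))\ge0$ for all $(A,X)\in\tilde V_{ac}^n$.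
   Context: A matrix gauge on a complex vector space $V$ is a sequence $\{\nu_n:M_n(V)\to[0,\infty)\}$ with $\nu_n(x+y)\le\nu_n(x)+\nu_n(y)$, $\nu_n(tx)=t\nu_n(x)$ ($t\ge0$), $\nu_k(X^*AX)\le\|X\|^2\nu_n(A)$ for scalar $X\in M_{n,k}$, and $\nu_{n+m}(A\oplus B)=\max\{\nu_n(A),\nu_m(B)\}$; it is $\mathbb{C}$-proper if $\nu_1(i^kz)=0$ for $k=0,1,2,3$ implies $z=0$. The unitization of $(V,\nu)$ is $\tilde V=V\times\mathbb{C}$ (entrywise operations), with $M_n(\tilde V)$ identified with $M_n(V)\times M_n$, and for $(A,X)\in M_n(\tilde V)$, $u_n(A,X)=\inf\{t>0: X_t\gg0,\ \nu_n(X_t^{-1/2}AX_t^{-1/2})\le1\}$, where $X_t=tI_n-\operatorname{Re}(X)$, $\operatorname{Re}(X)=\frac12(X+X^* )$, and $X_t\gg0$ means $\sigma(X_t)\subset(0,\infty)$; scalar matrices act on $(A,X)$ by $T^*(A,X)T=(T^*AT,T^*XT)$. An operator system is a self-adjoint subspace of $B(K)$ containing $I_K$; $M_n(S)\subseteq B(K^n)$, and $\tilde\phi^{(n)}(A,X)=\phi^{(n)}(A)+e\otimes X$. *)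

(* Defs.v *)
(* Complex scalars: an arbitrary C : numClosedFieldType
   (MathComp's abstraction of the complex numbers; ℂ itself is not available). *)
From HB Require Import structures.
From mathcomp Require Import all_boot all_order all_algebra.
Set Implicit Arguments. Unset Strict Implicit. Unset Printing Implicit Defensive.
Import Order.TTheory GRing.Theory Num.Theory.
Local Open Scope ring_scope.

Section Defs.
Variable C : numClosedFieldType.

Definition adjmx m n (X : 'M[C]_(m, n)) : 'M[C]_(n, m) := (map_mx Num.conj X)^T.

Definition spec_pos n (M : 'M[C]_n) : Prop :=
  forall a : C, eigenvalue M a -> 0 < a.

Definition Remx n (X : 'M[C]_n) : 'M[C]_n := 2^-1 *: (X + adjmx X).

Definition is_inv_sqrt n (P M : 'M[C]_n) : Prop :=
  adjmx P = P /\ spec_pos P /\ P *m P *m M = 1%:M.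

Variable V : lmodType C.

(* scalar matrices acting on M_n(V):  T^* A T  for T in M_{n,k} *)
Definition sandwich n k (T : 'M[C]_(n, k)) (A : 'M[V]_n) : 'M[V]_k :=
  \matrix_(i < k, j < k) \sum_(p < n) \sum_(q < n) (((T p i)^* * T q j) *: A p q).

Definition opnorm2_le n k (X : 'M[C]_(n, k)) (c : C) : Prop :=
  forall v : 'cV[C]_k,
    (adjmx (X *m v) *m (X *m v)) ord0 ord0 <= c * (adjmx v *m v) ord0 ord0.

Definition matrix_gauge (nu : forall n, 'M[V]_n -> C) : Prop :=
  (forall n (A : 'M[V]_n), 0 <= nu n A) /\
  (forall n (A B : 'M[V]_n), nu n (A + B) <= nu n A + nu n B) /\
  (forall n (t : C) (A : 'M[V]_n), 0 <= t -> nu n (map_mx (fun v => t *: v) A) = t * nu n A) /\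
  (forall n k (X : 'M[C]_(n, k)) (A : 'M[V]_n) (c : C), 0 <= c ->
      opnorm2_le X c -> nu k (sandwich X A) <= c * nu n A) /\
  (forall n m (A : 'M[V]_n) (B : 'M[V]_m),
      nu (n + m)%N (block_mx A 0 0 B) = Num.max (nu n A) (nu m B)).

Definition C_proper (nu : forall n, 'M[V]_n -> C) : Prop :=
  forall z : V, (forall k : nat, (k < 4)%N -> nu 1%N (const_mx ('i ^+ k *: z)) = 0) -> z = 0.

(* Unitization: u_n(A, X) = inf { t > 0 : X_t >> 0, nu_n(X_t^{-1/2} A X_t^{-1/2}) <= 1 },
   X_t = t I - Re X.  Admissible t : *)
Definition u_adm (nu : forall n, 'M[V]_n -> C) n (A : 'M[V]_n) (X : 'M[C]_n) (t : C) : Prop :=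
  0 < t /\
  let Xt := t%:M - Remx X in
  spec_pos Xt /\ exists P : 'M[C]_n, is_inv_sqrt P Xt /\ nu n (sandwich P A) <= 1.

(* u_n(A, X) = 0  (infimum of a subset of (0,oo) equal to 0) *)
Definition u_zero (nu : forall n, 'M[V]_n -> C) n (A : 'M[V]_n) (X : 'M[C]_n) : Prop :=
  forall eps : C, 0 < eps -> exists t, t < eps /\ u_adm nu A X t.

Definition accretive (nu : forall n, 'M[V]_n -> C) n (A : 'M[V]_n) (X : 'M[C]_n) : Prop :=
  u_zero nu (- A) (- X).

End Defs.

Section OpSys.
Variable C : numClosedFieldType.

Definition inner_product (K : lmodType C) (ip : K -> K -> C) : Prop :=
  (forall (a : C) (x y z : K), ip (a *: x + y) z = a * ip x z + ip y z) /\
  (forall x y : K, ip y x = (ip x y)^*) /\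
  (forall x : K, 0 <= ip x x) /\
  (forall x : K, ip x x = 0 -> x = 0).

Variable K : lmodType C.
Variable ip : K -> K -> C.

Definition lin_op (T : K -> K) : Prop :=
  forall (a : C) (x y : K), T (a *: x + y) = a *: T x + T y.

Definition bounded_op (T : K -> K) : Prop :=
  exists c : C, forall x : K, ip (T x) (T x) <= c * ip x x.

Definition is_adjoint (T T' : K -> K) : Prop :=
  forall x y : K, ip (T x) y = ip x (T' y).

Definition operator_system (S : (K -> K) -> Prop) : Prop :=
  (forall T, S T -> lin_op T /\ bounded_op T) /\
  S (fun x => x) /\
  (forall (a : C) T1 T2, S T1 -> S T2 -> S (fun x => a *: T1 x + T2 x)) /\
  (forall T, S T -> exists T', S T' /\ is_adjoint T T').

Definition qform n (s : 'M[K -> K]_n) (xi : 'I_n -> K) : C :=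
  \sum_(i < n) ip (\sum_(j < n) s i j (xi j)) (xi i).

(* Re(s) <= t (e ⊗ I_n) in B(K^n):  <(t I - Re s) xi, xi> >= 0 for all xi,
   using <Re(s) xi, xi> = Re <s xi, xi>. *)
Definition Re_le n (s : 'M[K -> K]_n) (t : C) : Prop :=
  forall xi : 'I_n -> K, 'Re (qform s xi) <= t * \sum_(i < n) ip (xi i) (xi i).

(* nu_e^n(s) <= c, where nu_e^n(s) = inf { t > 0 : Re(s) <= t e ⊗ I_n } *)
Definition nu_e_le n (s : 'M[K -> K]_n) (c : C) : Prop :=
  forall eps : C, 0 < eps -> exists t, 0 < t /\ t < c + eps /\ Re_le s t.

Definition Re_nonneg n (s : 'M[K -> K]_n) : Prop :=
  forall xi : 'I_n -> K, 0 <= 'Re (qform s xi).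

Variable V : lmodType C.

Definition lin_map (phi : V -> K -> K) : Prop :=
  forall (a : C) (v w : V) (x : K), phi (a *: v + w) x = a *: phi v x + phi w x.

Definition ampl n (phi : V -> K -> K) (A : 'M[V]_n) : 'M[K -> K]_n :=
  \matrix_(i, j) phi (A i j).

Definition unital_ext n (phi : V -> K -> K) (A : 'M[V]_n) (X : 'M[C]_n) : 'M[K -> K]_n :=
  \matrix_(i, j) (fun x => phi (A i j) x + X i j *: x).

End OpSys.

(* Main.v *)
Require Import Defs.
From HB Require Import structures.
From mathcomp Require Import all_boot all_order all_algebra.
From mathcomp Require Import ring.
From Stdlib Require Import FunctionalExtensionality.
Set Implicit Arguments. Unset Strict Implicit. Unset Printing Implicit Defensive.
Import Order.TTheory GRing.Theory Num.Theory.
Local Open Scope ring_scope.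


Section IP.
Variable C : numClosedFieldType.
Variable K : lmodType C.
Variable ip : K -> K -> C.
Hypothesis Hip : inner_product ip.

Lemma ipD x y z : ip (x + y) z = ip x z + ip y z.
Proof. by case: Hip => H _; have := H 1 x y z; rewrite scale1r mul1r. Qed.
Lemma ip0 z : ip 0 z = 0.
Proof.
have := ipD 0 0 z; rewrite addr0 => /(congr1 (fun w => w - ip 0 z)).
by rewrite subrr addrK => ->.
Qed.
Lemma ipZ a x z : ip (a *: x) z = a * ip x z.
Proof. by case: Hip => H _; have := H a x 0 z; rewrite addr0 ip0 addr0. Qed.
Lemma ip_sum I (r : seq I) (P : pred I) (F : I -> K) z :
  ip (\sum_(i <- r | P i) F i) z = \sum_(i <- r | P i) ip (F i) z.
Proof.
elim/big_rec2: _ => [|i y1 y2 _ <-]; first exact: ip0.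
by rewrite ipD.
Qed.
Lemma ipC x y : ip y x = (ip x y)^*.
Proof. by case: Hip => _ []. Qed.
Lemma ipDr x y z : ip z (x + y) = ip z x + ip z y.
Proof. by rewrite ipC ipD rmorphD /= -!ipC. Qed.
Lemma ipZr a x z : ip z (a *: x) = a^* * ip z x.
Proof. by rewrite ipC ipZ rmorphM /= -ipC. Qed.
Lemma ip0r z : ip z 0 = 0.
Proof. by rewrite ipC ip0 rmorph0. Qed.
Lemma ip_sumr I (r : seq I) (P : pred I) (F : I -> K) z :
  ip z (\sum_(i <- r | P i) F i) = \sum_(i <- r | P i) ip z (F i).
Proof.
elim/big_rec2: _ => [|i y1 y2 _ <-]; first exact: ip0r.
by rewrite ipDr.
Qed.
Lemma ip_ge0 x : 0 <= ip x x.
Proof. by case: Hip => _ [_ []]. Qed.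
End IP.



Section Phi.
Variable C : numClosedFieldType.
Variable K : lmodType C.
Variable ip : K -> K -> C.
Hypothesis Hip : inner_product ip.
Variable V : lmodType C.
Variable phi : V -> K -> K.
Hypothesis Hphi : lin_map phi.
Hypothesis Hop : forall v, lin_op (phi v).

Lemma phiD v w x : phi (v + w) x = phi v x + phi w x.
Proof. by have := Hphi 1 v w x; rewrite !scale1r. Qed.
Lemma phi0 x : phi 0 x = 0.
Proof.
have := phiD 0 0 x; rewrite addr0 => /(congr1 (fun w => w - phi 0 x)).
by rewrite subrr addrK => ->.
Qed.
Lemma phiZ a v x : phi (a *: v) x = a *: phi v x.
Proof. by have := Hphi a v 0 x; rewrite addr0 phi0 addr0. Qed.
Lemma phiN v x : phi (- v) x = - phi v x.
Proof. by rewrite -scaleN1r phiZ scaleN1r. Qed.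
Lemma phi_sum I (r : seq I) (P : pred I) (F : I -> V) x :
  phi (\sum_(i <- r | P i) F i) x = \sum_(i <- r | P i) phi (F i) x.
Proof. elim/big_rec2: _ => [|i y1 y2 _ <-]; [exact: phi0 | by rewrite phiD]. Qed.

Lemma opD v x y : phi v (x + y) = phi v x + phi v y.
Proof. by have := Hop v 1 x y; rewrite !scale1r. Qed.
Lemma op0 v : phi v 0 = 0.
Proof.
have := opD v 0 0; rewrite addr0 => /(congr1 (fun w => w - phi v 0)).
by rewrite subrr addrK => /esym.
Qed.
Lemma opZ v a x : phi v (a *: x) = a *: phi v x.
Proof. by have := Hop v a x 0; rewrite addr0 op0 addr0. Qed.
Lemma op_sum v I (r : seq I) (P : pred I) (F : I -> K) :
  phi v (\sum_(i <- r | P i) F i) = \sum_(i <- r | P i) phi v (F i).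
Proof. elim/big_rec2: _ => [|i y1 y2 _ <-]; [exact: op0 | by rewrite opD]. Qed.

Definition matv n (M : 'M[C]_n) (xi : 'I_n -> K) : 'I_n -> K :=
  fun i => \sum_(j < n) M i j *: xi j.

Lemma qform_sandwich n (P : 'M[C]_n) (A : 'M[V]_n) (eta : 'I_n -> K) :
  qform ip (ampl phi (sandwich P A)) eta = qform ip (ampl phi A) (matv P eta).
Proof.
rewrite /qform /matv.
transitivity (\sum_(i < n) \sum_(j < n) \sum_(p < n) \sum_(q < n)
   ((P p i)^* * P q j * ip (phi (A p q) (eta j)) (eta i))).
  apply: eq_bigr => i _; rewrite ip_sum //; apply: eq_bigr => j _.
  rewrite !mxE phi_sum ip_sum //; apply: eq_bigr => p _.
  rewrite phi_sum ip_sum //; apply: eq_bigr => q _.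
  by rewrite phiZ ipZ.
symmetry.
transitivity (\sum_(p < n) \sum_(q < n) \sum_(i < n) \sum_(j < n)
   ((P p i)^* * P q j * ip (phi (A p q) (eta j)) (eta i))).
  apply: eq_bigr => p _; rewrite ip_sum //; apply: eq_bigr => q _.
  rewrite mxE ip_sumr //; apply: eq_bigr => i _.
  rewrite ipZr // op_sum ip_sum // mulr_sumr; apply: eq_bigr => j _.
  by rewrite opZ ipZ // mulrA.
under eq_bigr => p _ do rewrite exchange_big.
under eq_bigr => p _ do under eq_bigr => i _ do rewrite exchange_big.
rewrite exchange_big; apply: eq_bigr => i _; exact: exchange_big.
Qed.
End Phi.



Section G.
Variable C : numClosedFieldType.
Variable K : lmodType C.
Variable ip : K -> K -> C.
Hypothesis Hip : inner_product ip.

Lemma matv_mul n (P Q : 'M[C]_n) (xi : 'I_n -> K) :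
  matv P (matv Q xi) = matv (P *m Q) xi.
Proof.
apply: functional_extensionality => i; rewrite /matv.
under eq_bigr => j _ do rewrite scaler_sumr.
rewrite exchange_big; apply: eq_bigr => k _.
rewrite mxE scaler_suml; apply: eq_bigr => j _; by rewrite scalerA.
Qed.

Lemma matv1 n (xi : 'I_n -> K) : matv 1%:M xi = xi.
Proof.
apply: functional_extensionality => i; rewrite /matv.
rewrite (bigD1 i) //= mxE eqxx mulr1n scale1r big1 ?addr0 // => j /negbTE.
by rewrite mxE eq_sym => ->; rewrite mulr0n scale0r.
Qed.

Definition G n (M : 'M[C]_n) (xi : 'I_n -> K) : C :=
  \sum_(i < n) ip (matv M xi i) (xi i).

Lemma G_norm n (Q : 'M[C]_n) (xi : 'I_n -> K) :
  \sum_(i < n) ip (matv Q xi i) (matv Q xi i) = G (adjmx Q *m Q) xi.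
Proof.
rewrite /G /matv.
transitivity (\sum_(i < n) \sum_(j < n) \sum_(k < n)
   ((Q i k)^* * Q i j * ip (xi j) (xi k))).
  apply: eq_bigr => i _; rewrite ip_sum //; apply: eq_bigr => j _.
  rewrite ipZ // ip_sumr // mulr_sumr; apply: eq_bigr => k _.
  by rewrite ipZr // mulrA [Q i j * _]mulrC.
symmetry.
transitivity (\sum_(k < n) \sum_(j < n) \sum_(i < n)
   ((Q i k)^* * Q i j * ip (xi j) (xi k))).
  apply: eq_bigr => k _; rewrite ip_sum //; apply: eq_bigr => j _.
  rewrite ipZ // mxE mulr_suml; apply: eq_bigr => i _.
  by rewrite /adjmx !mxE.
under eq_bigr => k _ do rewrite exchange_big.
rewrite exchange_big; apply: eq_bigr => i _; exact: exchange_big.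
Qed.

Lemma GD n (M N : 'M[C]_n) (xi : 'I_n -> K) : G (M + N) xi = G M xi + G N xi.
Proof.
rewrite /G /matv -big_split; apply: eq_bigr => i _ /=.
rewrite -ipD //; congr ip; rewrite -big_split; apply: eq_bigr => j _.
by rewrite mxE scalerDl.
Qed.

Lemma GZ n c (M : 'M[C]_n) (xi : 'I_n -> K) : G (c *: M) xi = c * G M xi.
Proof.
rewrite /G /matv mulr_sumr; apply: eq_bigr => i _ /=.
rewrite -ipZ //; congr ip; rewrite scaler_sumr; apply: eq_bigr => j _.
by rewrite mxE scalerA.
Qed.

Lemma G1 n (xi : 'I_n -> K) : G 1%:M xi = \sum_(i < n) ip (xi i) (xi i).
Proof. by rewrite /G matv1. Qed.

Lemma Gadj n (M : 'M[C]_n) (xi : 'I_n -> K) : G (adjmx M) xi = (G M xi)^*.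
Proof.
rewrite /G /matv rmorph_sum /=.
transitivity (\sum_(i < n) \sum_(j < n) ((M j i)^* * ip (xi j) (xi i))).
  apply: eq_bigr => i _; rewrite ip_sum //; apply: eq_bigr => j _.
  by rewrite ipZ // /adjmx !mxE.
rewrite exchange_big; apply: eq_bigr => j _.
rewrite ip_sum // rmorph_sum; apply: eq_bigr => i _ /=.
by rewrite ipZ // rmorphM /= -ipC.
Qed.
End G.



Section Adj.
Variable C : numClosedFieldType.
Lemma adjmxM m n p (M : 'M[C]_(m, n)) (N : 'M[C]_(n, p)) :
  adjmx (M *m N) = adjmx N *m adjmx M.
Proof.
apply/matrixP => i j; rewrite /adjmx !mxE rmorph_sum /=; apply: eq_bigr => k _.
by rewrite !mxE rmorphM; exact: mulrC.
Qed.
Lemma adjmxD n (M N : 'M[C]_n) : adjmx (M + N) = adjmx M + adjmx N.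
Proof. by apply/matrixP => i j; rewrite /adjmx !mxE rmorphD. Qed.
Lemma adjmxZ n c (M : 'M[C]_n) : adjmx (c *: M) = c^* *: adjmx M.
Proof. by apply/matrixP => i j; rewrite /adjmx !mxE rmorphM. Qed.
Lemma adjmxN n (M : 'M[C]_n) : adjmx (- M) = - adjmx M.
Proof. by apply/matrixP => i j; rewrite /adjmx !mxE rmorphN. Qed.
Lemma adjmxK n (M : 'M[C]_n) : adjmx (adjmx M) = M.
Proof. by apply/matrixP => i j; rewrite /adjmx !mxE conjCK. Qed.
Lemma adjmx_scalar n (t : C) : t \is Num.real -> adjmx (t%:M : 'M[C]_n) = t%:M.
Proof.
move=> Rt; apply/matrixP => i j; rewrite /adjmx !mxE rmorphMn /= conj_Creal //.
by rewrite eq_sym.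
Qed.
Lemma RemxN n (X : 'M[C]_n) : Remx (- X) = - Remx X.
Proof. by rewrite /Remx adjmxN -opprD scalerN. Qed.
Lemma Remx_adj n (X : 'M[C]_n) : adjmx (Remx X) = Remx X.
Proof.
rewrite /Remx adjmxZ adjmxD adjmxK.
have R2 : (2^-1 : C) \is Num.real by rewrite rpredV rpred_nat.
by rewrite (conj_Creal R2) [adjmx X + X]addrC.
Qed.
End Adj.

Lemma real_lim (C : numClosedFieldType) (x y : C) : x \is Num.real -> 0 <= y ->
  (forall e, 0 < e -> 0 <= x + e * y) -> 0 <= x.
Proof.
move=> Rx y0 H; rewrite real_leNgt ?real0 //; apply/negP => xlt0.
have y1 : 0 < y + 1 by rewrite ltr_wpDl.
have epos : 0 < - x / (y + 1) by rewrite divr_gt0 // oppr_gt0.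
have := H _ epos.
have -> : x + - x / (y + 1) * y = x * (y + 1)^-1.
  by field; rewrite gt_eqF.
rewrite pmulr_lge0 ?invr_gt0 // => h.
by have := le_lt_trans h xlt0; rewrite ltxx.
Qed.



Lemma qform_unital (C : numClosedFieldType) (K : lmodType C) (ip : K -> K -> C)
  (V : lmodType C) (phi : V -> K -> K) :
  inner_product ip -> forall n (A : 'M[V]_n) (X : 'M[C]_n) (xi : 'I_n -> K),
  qform ip (unital_ext phi A X) xi = qform ip (ampl phi A) xi + G ip X xi.
Proof.
move=> Hip n A X xi; rewrite /qform /G /matv -big_split; apply: eq_bigr => i _ /=.
rewrite -ipD //; congr ip; rewrite -big_split; apply: eq_bigr => j _.
by rewrite !mxE.
Qed.

Lemma qform_neg (C : numClosedFieldType) (K : lmodType C) (ip : K -> K -> C)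
  (V : lmodType C) (phi : V -> K -> K) :
  inner_product ip -> lin_map phi -> forall n (A : 'M[V]_n) (xi : 'I_n -> K),
  qform ip (ampl phi (- A)) xi = - qform ip (ampl phi A) xi.
Proof.
move=> Hip Hphi n A xi; rewrite /qform -sumrN; apply: eq_bigr => i _.
rewrite -[RHS]mulN1r -ipZ // scaleN1r -sumrN; congr ip; apply: eq_bigr => j _.
by rewrite !mxE phiN.
Qed.



Theorem lemma6p5 (C : numClosedFieldType) (V : lmodType C)
  (nu : forall n, 'M[V]_n -> C)
  (K : lmodType C) (ip : K -> K -> C) (S : (K -> K) -> Prop)
  (phi : V -> K -> K) :
  matrix_gauge nu -> C_proper nu ->
  inner_product ip -> operator_system ip S ->
  lin_map phi -> (forall v, S (phi v)) ->
  (forall n (A : 'M[V]_n), nu_e_le ip (ampl phi A) (nu n A)) ->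
  forall n (A : 'M[V]_n) (X : 'M[C]_n),
    accretive nu A X -> Re_nonneg ip (unital_ext phi A X).
Proof.
move=> _ _ Hip Hs Hphi HS Hnu n A X Hacc xi.
have Hop v : lin_op (phi v) by case: Hs => H _; case: (H _ (HS v)).
rewrite (qform_unital phi Hip) raddfD /=.
set a := 'Re (qform ip (ampl phi A) xi).
set N := \sum_(i < n) ip (xi i) (xi i).
set g := G ip X xi.
have N0 : 0 <= N by apply: sumr_ge0 => i _; exact: ip_ge0.
have key : forall t, u_adm nu (- A) (- X) t -> 0 <= a + 'Re g + t * N.
  move=> t [t0 /= [_ [P [[HPa [_ HPP]] HB]]]].
  set Xt := t%:M - Remx (- X) in HPP *.
  have GXt : G ip Xt xi = t * N + 'Re g.
    rewrite /Xt RemxN opprK GD // -scalemx1 GZ // G1 // /Remx GZ // GD // Gadj //.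
    by rewrite ReE [2^-1 * _]mulrC.
  have adjXt : adjmx Xt = Xt.
    by rewrite /Xt adjmxD adjmxN adjmx_scalar ?gtr0_real // Remx_adj.
  set Q := P *m Xt.
  have QQ : adjmx Q *m Q = Xt.
    rewrite /Q adjmxM HPa adjXt -!mulmxA [P *m (P *m Xt)]mulmxA HPP.
    by rewrite mulmx1.
  have PQ : P *m Q = 1%:M by rewrite /Q mulmxA HPP.
  have f0 : 0 <= t * N + 'Re g.
    rewrite -GXt -QQ -G_norm //; apply: sumr_ge0 => i _; exact: ip_ge0.
  rewrite -addrA [_ + t * N]addrC.
  set f := t * N + 'Re g in GXt f0 *.
  apply: (real_lim (y := f)) => //; first by rewrite rpredD ?Creal_Re ?ger0_real.
  move=> e e0.
  have [s [s0 [slt Hle]]] := Hnu n (sandwich P (- A)) e e0.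
  have := Hle (matv Q xi).
  rewrite (qform_sandwich Hip Hphi Hop) matv_mul PQ matv1 (qform_neg Hip Hphi).
  rewrite raddfN /= (G_norm Hip) QQ GXt -/a => H1.
  have H2 : - a <= (1 + e) * f.
    apply: (le_trans H1); apply: ler_wpM2r => //.
    apply: (le_trans (ltW slt)); by rewrite lerD2r.
  rewrite -subr_ge0 opprK in H2.
  have -> : a + f + e * f = (1 + e) * f + a by ring.
  exact: H2.
apply: (real_lim (y := N)) => //; first by rewrite rpredD ?Creal_Re.
move=> e e0.
have [t [tlt Hadm]] := Hacc e e0.
apply: (le_trans (key t Hadm)).
by rewrite lerD2l ler_wpM2r // ltW.
Qed.
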